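(* Let $\Sigma\in\mathbb{R}^{n\times n}$ be a symmetric positive definite matrix with eigenvalues $\lambda_1,\ldots,\lambda_n$, $\lambda_{\min}=\min_i\lambda_i$, $\lambda_{\mathrm{mean}}=\mathrm{tr}(\Sigma)/n$. For $0<D\le\mathrm{tr}(\Sigma)$ let $L>0$ satisfy $\sum_{i=1}^n\min\{L,\lambda_i\}=D$, $D_i=\min\{L,\lambda_i\}$, and $R(D)=\sum_{i=1}^n\frac12\log\frac{\lambda_i}{D_i}$. For $\alpha\in[0,1]$, $D>0$ let $R_\alpha(D)=\frac12\log\det\big(\alpha I+\frac{n}{D}\Sigma\big)$, and let $\alpha^*\in[0,1]$ be the unique value with $R_{\alpha^*}(\mathrm{tr}(\Sigma))=0$. Then $\lim_{D\to0^+}\big(R_{\alpha^*}(D)-R(D)\big)=0$, $R_{\alpha^*}(\mathrm{tr}(\Sigma))=R(\mathrm{tr}(\Sigma))=0$, and for every $D\in(0,\mathrm{tr}(\Sigma)]$, $$\frac12\log\frac{\lambda_{\min}}{\lambda_{\mathrm{mean}}}\le\frac{R_{\alpha^*}(D)-R(D)}{n}\le\frac12\log\Big(2-\frac{\lambda_{\min}}{\lambda_{\mathrm{mean}}}\Big).$$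
   Context: $\log$ denotes the logarithm to a fixed base greater than $1$. $R(D)$ is the mean-square-distortion rate-distortion function of an $n$-dimensional Gaussian vector with covariance $\Sigma$ (reverse water-filling); $I$ is the $n\times n$ identity matrix. *)

(* Defs.v *)
From HB Require Import structures.
From mathcomp Require Import all_boot all_order all_algebra.
From mathcomp Require Import all_classical all_reals all_analysis.
Set Implicit Arguments. Unset Strict Implicit. Unset Printing Implicit Defensive.
Import Order.TTheory GRing.Theory Num.Theory.
Local Open Scope ring_scope.

Section Defs.
Variable R : realType.

Definition logb (b x : R) : R := ln x / ln b.

Definition sym_posdef n (S : 'M[R]_n) : Prop :=
  S^T = S /\ forall x : 'rV[R]_n, x != 0 -> 0 < (x *m S *m x^T) 0 0.

(* lam lists the eigenvalues of S with multiplicity *)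
Definition eigenvalues_of n (S : 'M[R]_n) (lam : 'I_n -> R) : Prop :=
  char_poly S = \prod_(i < n) ('X - (lam i)%:P).

Definition lam_min n (lam : 'I_n.+1 -> R) : R :=
  \big[Num.min/lam ord0]_(i < n.+1) lam i.

Definition R_alpha (b : R) n (S : 'M[R]_n) (alpha D : R) : R :=
  1/2 * logb b (\det (alpha%:M + (n%:R / D) *: S)).

(* reverse water-filling rate at water level L *)
Definition R_wf (b : R) n (lam : 'I_n -> R) (L : R) : R :=
  \sum_(i < n) 1/2 * logb b (lam i / Num.min L (lam i)).
End Defs.

(* Main.v *)
Require Import Defs.
From HB Require Import structures.
From mathcomp Require Import all_boot all_order all_algebra.
From mathcomp Require Import all_classical all_reals all_analysis.
From mathcomp Require Import ring lra.
Import Order.TTheory GRing.Theory Num.Theory.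
Local Open Scope ring_scope.
Local Open Scope classical_set_scope.

Section H.
Set Implicit Arguments.
Variable R : realType.

Lemma det_shift n (S : 'M[R]_n) lam : eigenvalues_of S lam ->
  forall y, \det (y%:M - S) = \prod_(i < n) (y - lam i).
Proof.
move=> H y; have := congr1 (horner^~ y) H.
rewrite horner_prod (eq_bigr _ (fun i _ => hornerXsubC _ _)) /char_poly.
have -> : (\det (char_poly_mx S)).[y] = horner_eval y (\det (char_poly_mx S)) by [].
rewrite -det_map_mx => <-; congr (\det _); apply/matrixP => i j.
by rewrite !mxE; case: (i == j); rewrite /= ?mulr1n ?mulr0n /horner_eval /= ?hornerE.
Qed.

Lemma det_aff n (S : 'M[R]_n) lam : eigenvalues_of S lam ->
  forall x c : R, c != 0 -> \det (x%:M + c *: S) = \prod_(i < n) (x + c * lam i).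
Proof.
move=> H x c c0.
have -> : x%:M + c *: S = (- c) *: ((- x / c)%:M - S).
  rewrite scalerBr scale_scalar_mx scaleNr opprK; congr (_%:M + _).
  by field.
rewrite detZ (det_shift H).
have -> : (- c) ^+ n = \prod_(i < n) (- c) by rewrite prodr_const card_ord.
rewrite -big_split /=; by apply: eq_bigr => i _; field.
Qed.

Lemma ln_prod n (F : 'I_n -> R) : (forall i, 0 < F i) ->
  ln (\prod_(i < n) F i) = \sum_(i < n) ln (F i).
Proof.
move=> Fp; rewrite unlock /=; elim: (index_enum _) => [|j r IH] /=; first by rewrite ln1.
rewrite lnM ?IH // posrE //.
elim: r {IH} => [|k r IH] /=; [exact: ltr01 | exact: mulr_gt0].
Qed.

Lemma trace_eig n (S : 'M[R]_n) lam : eigenvalues_of S lam ->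
  \tr S = \sum_(i < n) lam i.
Proof.
move=> H; case: n S lam H => [|n] S lam H; first by rewrite big_ord0 /mxtrace big_ord0.
apply: oppr_inj; rewrite -char_poly_trace // H.
have sz : size (map lam (index_enum 'I_n.+1)) = n.+1.
  by rewrite size_map /index_enum /= -enumT size_enum_ord.
have := @coefPn_prod_XsubC R (map lam (index_enum 'I_n.+1)); rewrite sz big_map => ->//.
by rewrite !big_map.
Qed.

Lemma eig_pos n (S : 'M[R]_n) lam : sym_posdef S -> eigenvalues_of S lam ->
  forall i, 0 < lam i.
Proof.
move=> [_ Hp] H i.
have : eigenvalue S (lam i).
  rewrite eigenvalue_root_char /root H horner_prod (bigD1 i) //= !hornerE subrr mul0r //.
case/eigenvalueP => v Hv v0.
have := Hp v v0; rewrite Hv -scalemxAl mxE.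
have h0 : forall j, true -> 0 <= v 0 j * v^T j 0 by move=> j _; rewrite mxE -expr2 sqr_ge0.
have s0 : 0 < (v *m v^T) 0 0.
  rewrite mxE lt_def; apply/andP; split; last exact: sumr_ge0.
  apply/negP => /eqP/psumr_eq0P h; case/negP: v0; apply/eqP/rowP => j.
  rewrite mxE; apply/eqP; rewrite -sqrf_eq0 expr2; apply/eqP.
  by have := h h0 j isT; rewrite mxE.
by rewrite pmulr_lgt0.
Qed.

Lemma lam_min_le n (lam : 'I_n.+1 -> R) i : lam_min lam <= lam i.
Proof. by rewrite /lam_min (bigD1 i) //= ge_min lexx. Qed.

Lemma lam_min_pos n (lam : 'I_n.+1 -> R) : (forall i, 0 < lam i) -> 0 < lam_min lam.
Proof.
move=> lp; rewrite /lam_min; apply: (big_ind (fun x => 0 < x)) => //.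
by move=> x y x0 y0; rewrite lt_min x0 y0.
Qed.

Lemma sum_const_ord n (c : R) : \sum_(i < n) c = c * n%:R.
Proof. by rewrite sumr_const card_ord mulr_natr. Qed.

Lemma diff_eq (b : R) n (S : 'M[R]_n.+1) lam (a D L : R) :
  1 < b -> eigenvalues_of S lam -> (forall i, 0 < lam i) -> 0 <= a -> 0 < D -> 0 < L ->
  R_alpha b S a D - R_wf b lam L =
  (\sum_(i < n.+1) ln ((a + n.+1%:R / D * lam i) * Num.min L (lam i) / lam i)) / (2 * ln b).
Proof.
move=> b1 H lp a0 D0 L0.
have c0 : 0 < n.+1%:R / D by rewrite divr_gt0 // ltr0n.
have xp : forall i, 0 < a + n.+1%:R / D * lam i.
  by move=> i; rewrite ltr_wpDl // mulr_gt0.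
have mp : forall i, 0 < Num.min L (lam i) by move=> i; rewrite lt_min L0 lp.
rewrite /R_alpha /R_wf /logb (det_aff H) ?gt_eqF // ln_prod //.
rewrite !mulr_suml mulr_sumr -sumrB; apply: eq_bigr => i _.
have p1 : 0 < (a + n.+1%:R / D * lam i) * Num.min L (lam i) by rewrite mulr_gt0.
rewrite (ln_div p1 (lp i)) (lnM (xp i) (mp i)) (ln_div (lp i) (mp i)).
have hb : ln b != 0 by rewrite gt_eqF // ln_gt0.
by field.
Qed.

Lemma ln_le_lin (x M : R) : 0 < x -> 0 < M -> ln x <= ln M + (x / M - 1).
Proof.
move=> x0 M0.
have h : -1 < x / M - 1 by rewrite ltrBrDr addNr divr_gt0.
have := le_ln1Dx h; rewrite addrC subrK (ln_div x0 M0).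
by move=> hh; lra.
Qed.

Lemma Ralpha_eq (b : R) n (S : 'M[R]_n.+1) lam (a D : R) :
  eigenvalues_of S lam -> (forall i, 0 < lam i) -> 0 <= a -> 0 < D ->
  R_alpha b S a D = (\sum_(i < n.+1) ln (a + n.+1%:R / D * lam i)) / (2 * ln b).
Proof.
move=> H lp a0 D0.
have c0 : 0 < n.+1%:R / D by rewrite divr_gt0 // ltr0n.
have xp : forall i, 0 < a + n.+1%:R / D * lam i.
  by move=> i; rewrite ltr_wpDl // mulr_gt0.
rewrite /R_alpha /logb (det_aff H) ?gt_eqF // ln_prod //.
by rewrite mul1r invfM; ring.
Qed.

Lemma sum_pos_lt n (F G : 'I_n.+1 -> R) : (forall i, F i < G i) ->
  \sum_(i < n.+1) F i < \sum_(i < n.+1) G i.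
Proof.
move=> h; apply: ltr_sum => //; apply/hasP; exists ord0 => //; exact: mem_index_enum.
Qed.
End H.

Theorem theorem2 (R : realType) (b : R) (n : nat) (S : 'M[R]_n.+1)
    (lam : 'I_n.+1 -> R) (Lf : R -> R) (astar : R) :
  1 < b ->
  sym_posdef S ->
  eigenvalues_of S lam ->
  (forall D, 0 < D <= \tr S ->
     0 < Lf D /\ \sum_(i < n.+1) Num.min (Lf D) (lam i) = D) ->
  0 <= astar <= 1 ->
  R_alpha b S astar (\tr S) = 0 ->
  [/\ (fun D => R_alpha b S astar D - R_wf b lam (Lf D)) @ 0^'+ --> 0,
      R_alpha b S astar (\tr S) = 0,
      R_wf b lam (Lf (\tr S)) = 0
    & forall D, 0 < D <= \tr S ->
      1/2 * logb b (lam_min lam / (\tr S / n.+1%:R))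
        <= (R_alpha b S astar D - R_wf b lam (Lf D)) / n.+1%:R
      /\ (R_alpha b S astar D - R_wf b lam (Lf D)) / n.+1%:R
        <= 1/2 * logb b (2 - lam_min lam / (\tr S / n.+1%:R))].
Proof.
move=> b1 Hs He HL /andP[a0 a1] Ha.
have Np : 0 < n.+1%:R :> R by rewrite ltr0n.
have lp := eig_pos Hs He.
have tr := trace_eig He.
have lnb : 0 < ln b by exact: ln_gt0.
have mle : forall i, lam_min lam <= lam i by move=> i; exact: lam_min_le.
have mp : 0 < lam_min lam by exact: lam_min_pos.
set m := lam_min lam in mle mp *.
set T := \tr S in tr HL Ha *.
have NmT : m * n.+1%:R <= T.
  by rewrite tr -sum_const_ord; apply: ler_sum => i _; exact: mle.
have Tp : 0 < T by apply: lt_le_trans NmT; rewrite mulr_gt0.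
set r := m / (T / n.+1%:R).
have rE : r = n.+1%:R / T * m.
  by rewrite /r; field; rewrite ?gt_eqF.
have rp : 0 < r by rewrite rE !mulr_gt0 ?invr_gt0.
have r1 : r <= 1.
  by rewrite rE mulrC mulrA ler_pdivrMr // mul1r.
have ar : astar <= 1 - r.
  rewrite leNgt; apply/negP => hr.
  move: Ha; rewrite (@Ralpha_eq R b n S lam astar T He lp a0 Tp) => /eqP; rewrite mulf_eq0 invr_eq0 mulf_eq0 !gt_eqF //= ?orbF.
  apply: (@lt_le_trans _ _ (ln (astar + r) * n.+1%:R)).
    by rewrite mulr_gt0 // ln_gt0 // -ltrBlDr.
  rewrite -sum_const_ord; apply: ler_sum => i _.
  have h1 : 0 < astar + r by rewrite ltr_wpDl.
  rewrite ler_ln ?posrE //; last by apply: lt_le_trans h1 _; rewrite lerD2l rE ler_wpM2l ?mle // ltW // divr_gt0.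
  by rewrite lerD2l rE ler_wpM2l ?mle // ltW // divr_gt0.
split => //.
- have lnb0 : ln b != 0 by rewrite gt_eqF.
  have N0 : n.+1%:R != 0 :> R by rewrite gt_eqF.
  have N0' : 1 + n%:R != 0 :> R by rewrite addrC natr1.
  have m0 : m != 0 by rewrite gt_eqF.
  apply/cvgrPdist_le => e e0.
  set C := astar / (m * (2 * ln b)).
  have C0 : 0 <= C by rewrite divr_ge0 // ltW // mulr_gt0 // mulr_gt0.
  have C1 : 0 < C + 1 by lra.
  set d := Num.min (Num.min (m * n.+1%:R) T) (e / (C + 1)).
  have d0 : 0 < d by rewrite !lt_min mulr_gt0 // Tp divr_gt0.
  near=> D.
  have D0 : 0 < D by near: D; exact: nbhs_right_gt.
  have Dd : D < d by near: D; exact: nbhs_right_lt.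
  move: Dd; rewrite !lt_min => /andP[/andP[DmN DT] De].
  have hD : 0 < D <= T by rewrite D0 ltW.
  have [L0 hsum] := HL D hD.
  have DNm : forall i, D / n.+1%:R < lam i.
    by move=> i; apply: lt_le_trans (mle i); rewrite ltr_pdivrMr.
  have LE : forall i, Num.min (Lf D) (lam i) = D / n.+1%:R.
    have LD : Lf D <= D / n.+1%:R.
      rewrite leNgt; apply/negP => hL.
      have : D < \sum_(i < n.+1) Num.min (Lf D) (lam i).
        apply: (@le_lt_trans _ _ (\sum_(i < n.+1) (D / n.+1%:R))).
          by rewrite sum_const_ord divfK.
        by apply: sum_pos_lt => i; rewrite lt_min hL DNm.
      by rewrite hsum ltxx.
    have hall : forall i, Num.min (Lf D) (lam i) = Lf D.
      by move=> i; apply: min_l; apply: le_trans LD _; apply: ltW.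
    move=> i; rewrite hall.
    have h : \sum_(j < n.+1) Num.min (Lf D) (lam j) = Lf D * n.+1%:R.
      by rewrite (eq_bigr _ (fun j _ => hall j)) sum_const_ord.
    rewrite hsum in h.
    by apply: (mulIf N0); rewrite divfK.
  rewrite sub0r normrN (@diff_eq R b n S lam astar D (Lf D) b1 He lp a0 D0 L0).
  rewrite (eq_bigr (fun i => ln (1 + astar * D / (n.+1%:R * lam i)))); last first.
    move=> i _; rewrite LE; congr ln; field.
    by rewrite N0' !gt_eqF.
  have tb : forall i, 0 <= ln (1 + astar * D / (n.+1%:R * lam i)) <= astar * D / (n.+1%:R * m).
    move=> i.
    have y0 : 0 <= astar * D / (n.+1%:R * lam i).
      by apply: divr_ge0; [apply: mulr_ge0 => //; exact: ltW | apply: ltW; rewrite mulr_gt0].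
    apply/andP; split; first by apply: ln_ge0; rewrite lerDl.
    apply: le_trans (le_ln1Dx _) _; first by apply: lt_le_trans y0; rewrite oppr_lt0 ltr01.
    apply: ler_wpM2l; first by apply: mulr_ge0 => //; exact: ltW.
    by rewrite lef_pV2 ?posrE ?mulr_gt0 // ler_wpM2l ?(ltW Np) // mle.
  set Sx := \sum_(i < n.+1) _.
  have S0 : 0 <= Sx by apply: sumr_ge0 => i _; case/andP: (tb i).
  have S1 : Sx <= astar * D / (n.+1%:R * m) * n.+1%:R.
    by rewrite -sum_const_ord; apply: ler_sum => i _; case/andP: (tb i).
  rewrite ger0_norm; last by apply: divr_ge0 => //; rewrite ltW // mulr_gt0.
  apply: (@le_trans _ _ (D * C)).
    have -> : D * C = (astar * D / (n.+1%:R * m) * n.+1%:R) / (2 * ln b).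
      rewrite /C; field.
      by rewrite N0' lnb0 m0.
    rewrite ler_pM2r ?invr_gt0 ?mulr_gt0 //.
  move: De; rewrite ltr_pdivlMr // mulrDr mulr1 => De.
  lra.

- have hT : 0 < T <= T by rewrite Tp lexx.
  have [L0 hsum] := HL T hT.
  have hmin : forall i, Num.min (Lf T) (lam i) = lam i.
    have h0 : forall i, true -> 0 <= lam i - Num.min (Lf T) (lam i).
      by move=> i _; rewrite subr_ge0 ge_min lexx orbT.
    have hs0 : \sum_(i < n.+1) (lam i - Num.min (Lf T) (lam i)) = 0.
      by rewrite sumrB hsum -tr subrr.
    move=> i; apply/eqP; rewrite eq_sym -subr_eq0; apply/eqP.
    by have := psumr_eq0P h0 hs0; apply.
  rewrite /R_wf; apply: big1 => i _.
  by rewrite hmin divff ?gt_eqF // /logb ln1 mul0r mulr0.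
- move=> D hD; have [L0 hsum] := HL D hD.
  case/andP: hD => D0 DT.
  rewrite (@diff_eq R b n S lam astar D (Lf D) b1 He lp a0 D0 L0).
  set L := Lf D in L0 hsum *.
  set x := fun i => (astar + n.+1%:R / D * lam i) * Num.min L (lam i) / lam i.
  have cp : 0 < n.+1%:R / D by rewrite divr_gt0.
  have xge : forall i, n.+1%:R / D * Num.min L (lam i) <= x i.
    move=> i.
    have -> : x i = astar * (Num.min L (lam i) / lam i) + n.+1%:R / D * Num.min L (lam i).
      by rewrite /x; field; rewrite !gt_eqF.
    apply: ler_wpDl => //; apply: mulr_ge0 => //; apply: divr_ge0; apply: ltW => //.
    by rewrite lt_min L0 lp.
  have xr : forall i, r <= x i.
    move=> i; apply: le_trans (xge i).
    have Dip : 0 < Num.min L (lam i) by rewrite lt_min L0 lp.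
    have key : m * D <= Num.min L (lam i) * T.
      case: (leP m L) => hmL.
        have hm : m <= Num.min L (lam i) by rewrite le_min hmL mle.
        apply: (@le_trans _ _ (Num.min L (lam i) * D)).
          by rewrite ler_wpM2r // ltW.
        by rewrite ler_wpM2l // ltW.
      have hall : forall j, Num.min L (lam j) = L.
        by move=> j; apply: min_l; apply: ltW; apply: lt_le_trans hmL (mle j).
      have DL : D = L * n.+1%:R.
        by rewrite -hsum (eq_bigr _ (fun j _ => hall j)) sum_const_ord.
      by rewrite hall DL mulrCA ler_wpM2l // ltW.
    have e1 : r = n.+1%:R / (D * T) * (m * D).
      by rewrite rE; field; rewrite !gt_eqF.
    have e2 : n.+1%:R / D * Num.min L (lam i) = n.+1%:R / (D * T) * (Num.min L (lam i) * T).
      by field; rewrite !gt_eqF.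
    by rewrite e1 e2 ler_wpM2l // ltW // divr_gt0 // mulr_gt0.
  have xp : forall i, 0 < x i by move=> i; exact: lt_le_trans rp (xr i).
  have -> : \sum_(i < n.+1) ln ((astar + n.+1%:R / D * lam i) * Num.min L (lam i) / lam i)
    = \sum_(i < n.+1) ln (x i) by [].
  set Sx := \sum_(i < n.+1) ln (x i).
  have lo : ln r * n.+1%:R <= Sx.
    by rewrite -sum_const_ord; apply: ler_sum => i _; rewrite ler_ln ?posrE.
  have Mp : 0 < 2 - r by lra.
  have sx : \sum_(i < n.+1) x i <= (astar + 1) * n.+1%:R.
    apply: (@le_trans _ _ (\sum_(i < n.+1) (astar + n.+1%:R / D * Num.min L (lam i)))).
      apply: ler_sum => i _.
      have -> : x i = astar * (Num.min L (lam i) / lam i) + n.+1%:R / D * Num.min L (lam i).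
        by rewrite /x; field; rewrite !gt_eqF.
      rewrite lerD2r ler_piMr //.
      by rewrite ler_pdivrMr // mul1r ge_min lexx orbT.
    rewrite big_split sum_const_ord -mulr_sumr hsum.
    have -> : n.+1%:R / D * D = n.+1%:R by field; rewrite gt_eqF.
    by rewrite mulrDl mul1r.
  have up : Sx <= ln (2 - r) * n.+1%:R.
    apply: (@le_trans _ _ (\sum_(i < n.+1) (ln (2 - r) + (x i / (2 - r) - 1)))).
      by apply: ler_sum => i _; apply: ln_le_lin.
    rewrite big_split sumrB !sum_const_ord -mulr_suml.
    have : (\sum_(i < n.+1) x i) / (2 - r) <= n.+1%:R.
      rewrite ler_pdivrMr //; apply: le_trans sx _.
      rewrite mulrC; apply: ler_wpM2l; [exact: ltW | lra].
    by move=> h; rewrite gerDl subr_le0 mul1r.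
  have lnb0 : ln b != 0 by rewrite gt_eqF.
  have N0 : n.+1%:R != 0 :> R by rewrite gt_eqF.
  split.
    have -> : 1/2 * logb b r = (ln r * n.+1%:R) / (2 * ln b) / n.+1%:R.
      by rewrite /logb; field; rewrite lnb0 andbT addrC natr1 N0.
    by rewrite ler_pM2r ?invr_gt0 // ler_pM2r ?invr_gt0 ?mulr_gt0.
  have -> : 1/2 * logb b (2 - r) = (ln (2 - r) * n.+1%:R) / (2 * ln b) / n.+1%:R.
    by rewrite /logb; field; rewrite lnb0 andbT addrC natr1 N0.
  by rewrite ler_pM2r ?invr_gt0 // ler_pM2r ?invr_gt0 ?mulr_gt0.

Unshelve. all: by end_near.
Qed.
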